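(* Let $H$ be a group, $K\lneq H$, $\phi\in\operatorname{Aut}(H)$, $G=\langle H,t;\ tkt^{-1}=\phi(k),\ k\in K\rangle$. For every $g\in G$ there exist $i\in\mathbb{Z}$ and $a\in H$ such that for all $b,c\in H$ with $g^{-1}bg=c$ we have $c=a^{-1}\phi^{i}(b)a$. *)

(* Defs.v *)
From Stdlib Require Import ZArith.

Record Group := {
  carrier :> Type;
  gmul : carrier -> carrier -> carrier;
  gone : carrier;
  ginv : carrier -> carrier;
  gmulA : forall x y z, gmul x (gmul y z) = gmul (gmul x y) z;
  gmul1l : forall x, gmul gone x = x;
  gmul1r : forall x, gmul x gone = x;
  gmulVl : forall x, gmul (ginv x) x = gone;
  gmulVr : forall x, gmul x (ginv x) = gone
}.

Arguments gmul {g}.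
Arguments gone {g}.
Arguments ginv {g}.

Record hom (A B : Group) := {
  hfun :> A -> B;
  hmulP : forall x y, hfun (gmul x y) = gmul (hfun x) (hfun y)
}.

Definition is_subgroup (H : Group) (K : H -> Prop) : Prop :=
  K gone /\ (forall x y, K x -> K y -> K (gmul x y)) /\ (forall x, K x -> K (ginv x)).

Definition is_proper_subgroup (H : Group) (K : H -> Prop) : Prop :=
  is_subgroup H K /\ exists h : H, ~ K h.

Arguments is_subgroup {H}.
Record aut (H : Group) := {
  aut_hom :> hom H H;
  aut_inv : H -> H;
  aut_invK : forall x, aut_inv (aut_hom x) = x;
  aut_K : forall x, aut_hom (aut_inv x) = x
}.

Definition aut_pow (H : Group) (phi : aut H) (i : Z) : H -> H :=
  match i with
  | Z0 => fun x => x
  | Zpos p => fun x => Pos.iter (fun y => phi y) x p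
  | Zneg p => fun x => Pos.iter (aut_inv H phi) x p
  end.

(* (G, iota, t) is the HNN extension  < H, t ; t k t^-1 = phi(k), k in K >,
   characterised (up to unique isomorphism) by the universal property of the
   presentation: iota : H -> G and t satisfy the relations, and for every
   group L, homomorphism f : H -> L and s in L satisfying the relations there
   is a unique homomorphism F : G -> L with F o iota = f and F t = s. *)
Definition is_HNN (H : Group) (K : H -> Prop) (phi : aut H)
  (G : Group) (iota : hom H G) (t : G) : Prop :=
  (forall k, K k -> gmul (gmul t (iota k)) (ginv t) = iota (phi k)) /\
  (forall (L : Group) (f : hom H L) (s : L),
     (forall k, K k -> gmul (gmul s (f k)) (ginv s) = f (phi k)) ->
     exists F : hom G L,
       (forall h, F (iota h) = f h) /\ F t = s /\
       (forall F' : hom G L, (forall h, F' (iota h) = f h) -> F' t = s ->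
          forall x, F' x = F x)).

Arguments is_proper_subgroup {H}.
Arguments aut_pow {H}.
Arguments is_HNN {H} K phi {G} iota t.

(* Main.v *)
Require Import Defs.
From Stdlib Require Import ZArith Lia.

Section GG.
Variable H : Group.

Lemma mul_cancel_l (a x y : H) : gmul a x = gmul a y -> x = y.
Proof.
  intro E. rewrite <- (gmul1l H x), <- (gmul1l H y), <- (gmulVl H a),
    <- !gmulA, E. reflexivity.
Qed.

Lemma inv_unique (x y : H) : gmul x y = gone -> y = ginv x.
Proof.
  intro E. apply (mul_cancel_l x). rewrite E, gmulVr. reflexivity.
Qed.

Lemma inv_mul (x y : H) : ginv (gmul x y) = gmul (ginv y) (ginv x).
Proof.
  symmetry. apply inv_unique.
  rewrite gmulA, <- (gmulA H x y), gmulVr, gmul1r, gmulVr. reflexivity.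
Qed.

End GG.
Arguments mul_cancel_l {H}. Arguments inv_unique {H}. Arguments inv_mul {H}.
Section GL.
Variable H : Group.
Lemma hom1 (K : Group) (f : hom H K) : f gone = gone.
Proof.
  apply (mul_cancel_l (f gone)). rewrite <- hmulP, !gmul1r. reflexivity.
Qed.

Lemma homV (K : Group) (f : hom H K) x : f (ginv x) = ginv (f x).
Proof.
  apply inv_unique. rewrite <- hmulP, gmulVr. apply hom1.
Qed.

Variable phi : aut H.

Lemma aut_inv_mul x y : aut_inv H phi (gmul x y) = gmul (aut_inv H phi x) (aut_inv H phi y).
Proof.
  rewrite <- (aut_K H phi x) at 1. rewrite <- (aut_K H phi y) at 1.
  rewrite <- hmulP. apply aut_invK.
Qed.

Lemma P_succ m x : aut_pow phi (Z.succ m) x = phi (aut_pow phi m x).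
Proof.
  destruct m as [|p|p].
  - reflexivity.
  - replace (Z.succ (Z.pos p)) with (Z.pos (Pos.succ p)) by lia.
    simpl. apply Pos.iter_succ.
  - destruct (Pos.succ_pred_or p) as [->|E].
    + simpl. symmetry. apply aut_K.
    + rewrite <- E. replace (Z.succ (Z.neg (Pos.succ (Pos.pred p)))) with (Z.neg (Pos.pred p)) by lia.
      simpl. rewrite Pos.iter_succ, aut_K. reflexivity.
Qed.

Lemma P_pred m x : aut_pow phi (Z.pred m) x = aut_inv H phi (aut_pow phi m x).
Proof.
  destruct m as [|p|p].
  - reflexivity.
  - destruct (Pos.succ_pred_or p) as [->|E].
    + simpl. symmetry. apply aut_invK.
    + rewrite <- E. replace (Z.pred (Z.pos (Pos.succ (Pos.pred p)))) with (Z.pos (Pos.pred p)) by lia.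
      simpl. rewrite Pos.iter_succ, aut_invK. reflexivity.
  - replace (Z.pred (Z.neg p)) with (Z.neg (Pos.succ p)) by lia.
    simpl. apply Pos.iter_succ.
Qed.

Lemma P_add m n x : aut_pow phi (m + n) x = aut_pow phi m (aut_pow phi n x).
Proof.
  induction m using Z.peano_ind.
  - reflexivity.
  - rewrite Z.add_succ_l, !P_succ, IHm. reflexivity.
  - rewrite Z.add_pred_l, !P_pred, IHm. reflexivity.
Qed.

Lemma P_mul m x y : aut_pow phi m (gmul x y) = gmul (aut_pow phi m x) (aut_pow phi m y).
Proof.
  induction m using Z.peano_ind.
  - reflexivity.
  - rewrite !P_succ, IHm, hmulP. reflexivity.
  - rewrite !P_pred, IHm, aut_inv_mul. reflexivity.
Qed.

Lemma P_one m : aut_pow phi m gone = gone.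
Proof.
  apply (mul_cancel_l (aut_pow phi m gone)). rewrite <- P_mul, !gmul1r. reflexivity.
Qed.

Lemma P_inv m x : aut_pow phi m (ginv x) = ginv (aut_pow phi m x).
Proof.
  apply inv_unique. rewrite <- P_mul, gmulVr. apply P_one.
Qed.

Definition sd_mul (u v : H * Z) : H * Z :=
  (gmul (fst u) (aut_pow phi (snd u) (fst v)), (snd u + snd v)%Z).
Definition sd_inv (u : H * Z) : H * Z :=
  (aut_pow phi (- snd u) (ginv (fst u)), (- snd u)%Z).

Lemma sd_A x y z : sd_mul x (sd_mul y z) = sd_mul (sd_mul x y) z.
Proof.
  destruct x as [x m], y as [y n], z as [z p]; unfold sd_mul; simpl.
  f_equal; [|lia]. rewrite P_mul, P_add, gmulA. reflexivity.
Qed.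

Lemma sd_1l x : sd_mul (gone, 0%Z) x = x.
Proof. destruct x; unfold sd_mul; simpl. rewrite gmul1l. reflexivity. Qed.

Lemma sd_1r x : sd_mul x (gone, 0%Z) = x.
Proof. destruct x; unfold sd_mul; simpl. rewrite P_one, gmul1r, Z.add_0_r. reflexivity. Qed.

Lemma sd_Vl x : sd_mul (sd_inv x) x = (gone, 0%Z).
Proof.
  destruct x as [x m]; unfold sd_mul, sd_inv; simpl.
  f_equal; [|lia]. rewrite <- P_mul, gmulVl. apply P_one.
Qed.

Lemma sd_Vr x : sd_mul x (sd_inv x) = (gone, 0%Z).
Proof.
  destruct x as [x m]; unfold sd_mul, sd_inv; simpl.
  f_equal; [|lia]. rewrite <- P_add. replace (m + - m)%Z with 0%Z by lia.
  simpl. apply gmulVr.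
Qed.

Definition SD : Group := {|
  carrier := H * Z; gmul := sd_mul; gone := (gone, 0%Z); ginv := sd_inv;
  gmulA := sd_A; gmul1l := sd_1l; gmul1r := sd_1r; gmulVl := sd_Vl; gmulVr := sd_Vr |}.

Definition sd_emb : hom H SD.
Proof.
  refine {| hfun := fun h : H => ((h, 0%Z) : SD) |}.
  intros x y. reflexivity.
Defined.

End GL.

Theorem lemma3p2 (H : Group) (K : H -> Prop) (phi : aut H)
  (G : Group) (iota : hom H G) (t : G)
  (hK : is_proper_subgroup K) (hG : is_HNN K phi iota t) :
  forall g : G, exists (i : Z) (a : H),
    forall b c : H, gmul (gmul (ginv g) (iota b)) g = iota c ->
      c = gmul (gmul (ginv a) (aut_pow phi i b)) a.
Proof.
  intro g. destruct hG as [_ U].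
  destruct (U (SD H phi) (sd_emb H phi) ((gone, 1%Z) : SD H phi)) as [F [HF [Ht _]]].
  { intros k _. simpl. unfold sd_mul, sd_inv; simpl.
    rewrite aut_K, gmul1l, <- (inv_unique gone gone (gmul1l _ gone)), gmul1r.
    reflexivity. }
  destruct (F g) as [x n] eqn:Eg.
  exists (- n)%Z, (aut_pow phi (- n) x).
  intros b c E. apply (f_equal F) in E.
  rewrite !hmulP, homV, HF, HF, Eg in E. simpl in E.
  unfold sd_mul, sd_inv in E; simpl in E.
  injection E as E1 _. rewrite <- E1, P_inv, Z.add_0_r. reflexivity.
Qed.
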